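(* Let ${\cal D}_{xy}'$ be the set of directions obtained by rotating ${\cal D}_{xy}=\{(0,1),(1,0),(0,-1),(-1,0)\}$ by $45$ degrees, and let $N$ be a set of $n$ points chosen uniformly and independently from the unit (axis-parallel) square. Then the expected complexity (number of vertices) of $\mathcal{CH}_{{\cal D}_{xy}'}(N)$ is $\Omega(\sqrt{n})$.
   Context: A set of directions is a set ${\cal D}$ of unit vectors in $\mathbb{R}^2$ such that $v\in{\cal D}$ implies $-v\in{\cal D}$. A pair $v_1,v_2\in{\cal D}$ is a ${\cal D}$-pair if $v_2$ is counterclockwise from $v_1$ and no vector of ${\cal D}$ lies strictly between them. With $\mathrm{pspan}(u_1,u_2)$ the open wedge of positive linear combinations of $u_1,u_2$, ${\cal Q}({\cal D})$ consists of the two open half-planes bounded by the line through the origin in direction $v$, for each $v\in{\cal D}$, together with $\mathrm{pspan}(-v_1,v_2)$ and $\mathrm{pspan}(v_1,-v_2)$ for each ${\cal D}$-pair $(v_1,v_2)$; ${\cal T}({\cal D})$ is the set of all translates of members of ${\cal Q}({\cal D})$, and $\mathcal{CH}_{{\cal D}}(S)=\mathbb{R}^2\setminus\bigcup\{I\in{\cal T}({\cal D}) : I\cap S=\emptyset\}$. *)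

(* Defs.v *)
From HB Require Import structures.
From mathcomp Require Import all_boot all_order all_algebra.
From mathcomp Require Import all_classical all_reals all_analysis.
From mathcomp Require Import finmap.
Set Implicit Arguments.
Unset Strict Implicit.
Unset Printing Implicit Defensive.
Import Order.TTheory GRing.Theory Num.Theory.
Local Open Scope classical_set_scope.
Local Open Scope ring_scope.

Section Defs.
Variable R : realType.
Notation pt := (R * R)%type.

Definition padd (p q : pt) : pt := (p.1 + q.1, p.2 + q.2).
Definition pscale (a : R) (p : pt) : pt := (a * p.1, a * p.2).
Definition popp (p : pt) : pt := (- p.1, - p.2).
Definition cross (u v : pt) : R := u.1 * v.2 - u.2 * v.1.
Definition sqdist (p q : pt) : R := (p.1 - q.1) ^+ 2 + (p.2 - q.2) ^+ 2.
Definition unit_vec (v : pt) : Prop := v.1 ^+ 2 + v.2 ^+ 2 = 1.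

Definition rot (t : R) (v : pt) : pt :=
  (cos t * v.1 - sin t * v.2, sin t * v.1 + cos t * v.2).

Definition directions (D : set pt) : Prop :=
  (forall v, D v -> unit_vec v) /\ (forall v, D v -> D (popp v)).

Definition ccw_from (v1 v2 : pt) : Prop :=
  exists t, 0 < t < 2 * pi /\ v2 = rot t v1.

Definition strictly_between (v1 w v2 : pt) : Prop :=
  exists s t, 0 < s < t /\ t < 2 * pi /\ w = rot s v1 /\ v2 = rot t v1.

Definition Dpair (D : set pt) (v1 v2 : pt) : Prop :=
  D v1 /\ D v2 /\ ccw_from v1 v2 /\ ~ (exists w, D w /\ strictly_between v1 w v2).

Definition pspan (u1 u2 : pt) : set pt :=
  [set x | exists a b, 0 < a /\ 0 < b /\ x = padd (pscale a u1) (pscale b u2)].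

Definition halfplane_l (v : pt) : set pt := [set x | 0 < cross v x].
Definition halfplane_r (v : pt) : set pt := [set x | cross v x < 0].

Definition Qset (D : set pt) : set (set pt) :=
  [set I | (exists v, D v /\ (I = halfplane_l v \/ I = halfplane_r v)) \/
           (exists v1 v2, Dpair D v1 v2 /\
              (I = pspan (popp v1) v2 \/ I = pspan v1 (popp v2)))].

Definition translate (p : pt) (A : set pt) : set pt := [set padd p x | x in A].

Definition Tset (D : set pt) : set (set pt) :=
  [set J | exists p I, Qset D I /\ J = translate p I].

Definition CH (D : set pt) (S : set pt) : set pt :=
  ~` \bigcup_(I in [set I | Tset D I /\ I `&` S = set0]) I.

Definition boundary (A : set pt) : set pt :=
  [set p | forall r, 0 < r ->
     (exists q, A q /\ sqdist p q < r ^+ 2) /\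
     (exists q, ~ A q /\ sqdist p q < r ^+ 2)].

Definition vertex (A : set pt) : set pt :=
  [set p | boundary A p /\
     ~ (exists r d, 0 < r /\ d != (0, 0) /\
          forall q, sqdist p q < r ^+ 2 ->
            (boundary A q <-> exists t, q = padd p (pscale t d)))].

Definition complexity (A : set pt) : \bar R :=
  if `[< finite_set (vertex A) >] then ((#|` fset_set (vertex A)|)%fset%:R)%:E
  else +oo%E.

Definition Dxy : set pt := [set (0, 1); (1, 0); (0, -1); (-1, 0)].
Definition Dxy' : set pt := rot (pi / 4) @` Dxy.

Definition unitI : set R := `[0, 1]%classic.

(* expectation of f (list of n points) for n points drawn independently and
   uniformly from [0,1]^2, as an iterated Lebesgue integral *)
Fixpoint unif_exp (n : nat) (f : seq pt -> \bar R) : \bar R :=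
  match n with
  | 0 => f [::]
  | n'.+1 =>
      (\int[@lebesgue_measure R]_(x in unitI)
         \int[@lebesgue_measure R]_(y in unitI)
            unif_exp n' (fun s => f ((x, y) :: s)))%E
  end.

Definition point_set (s : seq pt) : set pt := [set p | p \in s].

End Defs.

(* Main.v *)
Require Import Defs.
From HB Require Import structures.
From mathcomp Require Import all_boot all_order all_algebra.
From mathcomp Require Import all_classical all_reals all_analysis.
From mathcomp Require Import finmap.
From mathcomp Require Import ring lra zify.
Import Order.TTheory GRing.Theory Num.Theory.
Local Open Scope classical_set_scope.
Local Open Scope ring_scope.
Section G.
Variable R : realType.
Notation pt := (R * R)%type.
Definition rr : R := cos (pi / 4).
Lemma rr_gt0 : 0 < rr.
Proof. rewrite /rr; apply: cos_gt0_pihalf; have := pi_gt0 R; lra. Qed.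
Lemma sin_pi4 : sin (pi / 4) = rr :> R.
Proof. rewrite /rr -cosBpihalf -cosN; congr cos; lra. Qed.
Definition e1 : pt := (rr, - rr).
Definition e2 : pt := (rr, rr).
Lemma Dxy'_e1 : Dxy' e1.
Proof.
exists (0, -1); first by rewrite /Dxy /=; left; right.
rewrite /Defs.rot /e1 /= sin_pi4 -/rr; congr pair; lra.
Qed.
Lemma Dxy'_e2 : Dxy' e2.
Proof.
exists (1, 0); first by rewrite /Dxy /=; left; left; right.
rewrite /Defs.rot /e2 /= sin_pi4 -/rr; congr pair; lra.
Qed.
Lemma Dxy'_inv w : Dxy' w ->
  w = (- rr, rr) \/ w = (rr, rr) \/ w = (rr, - rr) \/ w = (- rr, - rr).
Proof.
case=> u Du <-; rewrite /Defs.rot sin_pi4 -/rr.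
case: Du => [[[->|->]|->]|->] /=.
- by left; congr pair; lra.
- by right; left; congr pair; lra.
- by right; right; left; congr pair; lra.
- by right; right; right; congr pair; lra.
Qed.
Lemma angle_pihalf (t : R) : 0 < t < 2 * pi -> sin t = 1 -> cos t = 0 -> t = pi / 2.
Proof.
move=> /andP[t0 t2] st ct.
have pi0 := pi_gt0 R.
have [tpi|tpi] := leP t pi.
  apply: cos_inj; rewrite ?in_itv /= ?ct ?cos_pihalf //.
    by apply/andP; split; lra.
  by apply/andP; split; lra.
have : 0 < sin (t - pi) by apply: sin_gt0_pi; apply/andP; split; lra.
have h := sinDpi (t - pi); rewrite subrK st in h; move=> hs; lra.
Qed.

Lemma rot_e1 (s : R) : Defs.rot s e1 = (rr * (cos s + sin s), rr * (sin s - cos s)).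
Proof. by rewrite /Defs.rot /e1 /=; congr pair; ring. Qed.

Lemma Dpair_e12 : Dpair (@Dxy' R) e1 e2.
Proof.
have r0 := rr_gt0.
have pi0 := pi_gt0 R.
split; first exact: Dxy'_e1.
split; first exact: Dxy'_e2.
split.
  exists (pi / 2); split; first by apply/andP; split; lra.
  by rewrite rot_e1 cos_pihalf sin_pihalf /e2; congr pair; ring.
case=> w [Dw [s [t [/andP[s0 st] [t2 [wE e2E]]]]]]; rewrite {}wE in Dw.
move: e2E; rewrite rot_e1 /e2 => -[h1 h2].
have c1 : cos t + sin t = 1.
  by apply: (mulfI (lt0r_neq0 r0)); rewrite -h1 mulr1.
have c2 : sin t - cos t = 1.
  by apply: (mulfI (lt0r_neq0 r0)); rewrite -h2 mulr1.
have ht : t = pi / 2 by apply: angle_pihalf; [apply/andP; split; lra|lra|lra].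
have cs : 0 < cos s by apply: cos_gt0_pihalf; apply/andP; split; lra.
have ss : 0 < sin s by apply: sin_gt0_pihalf; apply/andP; split; lra.
move: Dw; rewrite rot_e1 => /Dxy'_inv [[a b]|[[a b]|[[a b]|[a b]]]].
- have : rr * (cos s + sin s) > 0 by apply: mulr_gt0; lra.
  lra.
- have : cos s + sin s = 1 by apply: (mulfI (lt0r_neq0 r0)); rewrite a mulr1.
  have : sin s - cos s = 1 by apply: (mulfI (lt0r_neq0 r0)); rewrite b mulr1.
  lra.
- have : cos s + sin s = 1 by apply: (mulfI (lt0r_neq0 r0)); rewrite a mulr1.
  have : sin s - cos s = -1 by apply: (mulfI (lt0r_neq0 r0)); rewrite b mulrN1.
  lra.
- have : rr * (cos s + sin s) > 0 by apply: mulr_gt0; lra.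
  lra.
Qed.

Definition W (a : pt) : set pt := translate a (pspan (popp e1) e2).

Lemma WP a z : W a z <-> a.2 + `|z.1 - a.1| < z.2.
Proof.
have r0 := rr_gt0.
split.
  case=> v [al [be [al0 [be0 ->]]]] <- /=.
  have -> : a.1 + (al * - rr + be * rr) - a.1 = rr * (be - al) by ring.
  rewrite normrM (gtr0_norm r0).
  have [h|h] := lerP 0 (be - al).
    rewrite (ger0_norm h); nra.
  rewrite (ltr0_norm h); nra.
case: z => z1 z2 /= h.
set X := z1 - a.1; set Y := z2 - a.2.
have hX : `|X| < Y by rewrite /Y; lra.
have hY1 : - Y < X by move: hX; rewrite ltr_norml => /andP[].
have hY2 : X < Y by move: hX; rewrite ltr_norml => /andP[].
have r2 : 0 < 2 * rr by lra.
exists (padd (pscale ((Y - X) / (2 * rr)) (popp e1)) (pscale ((Y + X) / (2 * rr)) e2)).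
  exists ((Y - X) / (2 * rr)), ((Y + X) / (2 * rr)); split.
    by apply: divr_gt0; lra.
  by split => //; apply: divr_gt0; lra.
rewrite /padd /pscale /popp /e1 /e2 /=; congr pair.
  rewrite /X /=; field; lra.
rewrite /Y /=; field; lra.
Qed.

Lemma W_T a : Tset (@Dxy' R) (W a).
Proof.
exists a, (pspan (popp e1) e2); split => //.
right; exists e1, e2; split; [exact: Dpair_e12 | by left].
Qed.

Lemma notCH (S : set pt) a z : (forall q, S q -> ~ W a q) -> W a z ->
  ~ CH (@Dxy' R) S z.
Proof.
move=> hS hz; rewrite /CH /= => /(_ _); apply; exists (W a) => //; split.
  exact: W_T.
by apply/seteqP; split => // q [Wq Sq]; exact: (hS q Sq Wq).
Qed.

Lemma inCH (S : set pt) p : S p -> CH (@Dxy' R) S p.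
Proof. by move=> Sp [I [_ IS] Ip]; have : (I `&` S) p by []; rewrite IS. Qed.

Lemma sq_lt (x rho : R) : 0 < rho -> x ^+ 2 < rho ^+ 2 -> `|x| < rho.
Proof.
move=> r0; rewrite -(real_normK (num_real x)) => h.
have := normr_ge0 x; nra.
Qed.

Lemma W_open {a z} : W a z -> exists2 rho : R, 0 < rho &
  forall z', sqdist z z' < rho ^+ 2 -> W a z'.
Proof.
move/WP => h; exists ((z.2 - a.2 - `|z.1 - a.1|) / 2); first lra.
move=> z' hd; apply/WP.
rewrite /sqdist in hd.
have h1 : `|z.1 - z'.1| < (z.2 - a.2 - `|z.1 - a.1|) / 2.
  by apply: sq_lt; [lra | have := sqr_ge0 (z.2 - z'.2); lra].
have h2 : `|z.2 - z'.2| < (z.2 - a.2 - `|z.1 - a.1|) / 2.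
  by apply: sq_lt; [lra | have := sqr_ge0 (z.1 - z'.1); lra].
have t1 : `|z'.1 - a.1| <= `|z.1 - a.1| + `|z.1 - z'.1|.
  have -> : z'.1 - a.1 = (z.1 - a.1) + - (z.1 - z'.1) by ring.
  by rewrite -(normrN (z.1 - z'.1)); apply: ler_normD.
have t2 : z.2 - z'.2 <= `|z.2 - z'.2| by apply: ler_norm.
lra.
Qed.

Lemma not_bd (S : set pt) z : (exists a, (forall q, S q -> ~ W a q) /\ W a z) ->
  ~ boundary (CH (@Dxy' R) S) z.
Proof.
case=> a [hS hz] /(_ _)/= bd.
have [rho r0 hr] := W_open hz.
have [[q [CHq dq]] _] := bd rho r0.
exact: (notCH _ _ _ hS (hr _ dq) CHq).
Qed.



Lemma ext_cert (S : set pt) p (d x y : R) : S p ->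
  (forall q, S q -> q <> p -> q.2 - p.2 + d <= `|q.1 - p.1|) ->
  - `|x| < y -> 2 * `|x| <= d ->
  exists a, (forall q, S q -> ~ W a q) /\ W a (p.1 + x, p.2 + y).
Proof.
move=> Sp hd hy hx.
exists (p.1 + x, p.2 - `|x|); split; last first.
  by apply/WP => /=; rewrite subrr normr0; lra.
move=> q Sq /WP /= hq.
have [qp|qp] := eqVneq q p.
  move: hq; rewrite qp; have -> : p.1 - (p.1 + x) = - x by ring.
  rewrite normrN; lra.
have := hd q Sq (elimN eqP qp).
have : `|q.1 - p.1| <= `|q.1 - (p.1 + x)| + `|x|.
  have -> : q.1 - p.1 = (q.1 - (p.1 + x)) + x by ring.
  exact: ler_normD.
lra.
Qed.

Lemma vertex_max (S : set pt) p (d : R) : S p -> 0 < d ->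
  (forall q, S q -> q <> p -> q.2 - p.2 + d <= `|q.1 - p.1|) ->
  vertex (CH (@Dxy' R) S) p.
Proof.
move=> Sp d0 hd; split.
  move=> r r0; split; first by exists p; split; [exact: inCH|rewrite /sqdist !subrr; nra].
  exists (p.1 + 0, p.2 + r / 2); split.
    have [a [h1 h2]] : exists a, (forall q, S q -> ~ W a q) /\ W a (p.1 + 0, p.2 + r / 2).
      by apply: (ext_cert _ _ _ _ _ Sp hd); rewrite normr0; lra.
    exact: (notCH _ _ _ h1 h2).
  rewrite /sqdist /=; nra.
case=> r0 [[d1 d2] [r00 [dn0 H]]].
have K0 : 0 < `|d1| + `|d2|.
  move: dn0; rewrite xpair_eqE negb_and => /orP[] h.
    have hh : 0 < `|d1| by rewrite normr_gt0.
    have := normr_ge0 d2; lra.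
  have hh : 0 < `|d2| by rewrite normr_gt0.
  have := normr_ge0 d1; lra.
set K := `|d1| + `|d2| in K0.
set m := Num.min r0 d.
have m0 : 0 < m by rewrite /m lt_min r00 d0.
have m1 : m <= r0 by rewrite /m ge_min lexx.
have m2 : m <= d by rewrite /m ge_min lexx orbT.
set t := m / (2 * K).
have t0 : 0 < t by apply: divr_gt0; lra.
have tK : t * K = m / 2 by rewrite /t; field; lra.
set X := t * d1; set Y := t * d2.
have hX : `|X| = t * `|d1| by rewrite /X normrM gtr0_norm.
have hY : `|Y| = t * `|d2| by rewrite /Y normrM gtr0_norm.
have hXY : `|X| + `|Y| = m / 2 by rewrite hX hY -mulrDr.
have sq : X ^+ 2 + Y ^+ 2 < r0 ^+ 2.
  rewrite -(real_normK (num_real X)) -(real_normK (num_real Y)).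
  have := normr_ge0 X; have := normr_ge0 Y; nra.
have bd1 : boundary (CH (@Dxy' R) S) (p.1 + X, p.2 + Y).
  apply/(H _ _).2.
    rewrite /sqdist /=.
    have -> : p.1 - (p.1 + X) = - X by ring.
    have -> : p.2 - (p.2 + Y) = - Y by ring.
    by rewrite !sqrrN.
  by exists t.
have bd2 : boundary (CH (@Dxy' R) S) (p.1 + - X, p.2 + - Y).
  apply/(H _ _).2.
    rewrite /sqdist /=.
    have -> : p.1 - (p.1 + - X) = X by ring.
    by have -> : p.2 - (p.2 + - Y) = Y by ring.
  by exists (- t); rewrite /padd /pscale /= /X /Y !mulNr.
have xd : 2 * `|X| <= d by have := normr_ge0 Y; lra.
have [h1|h1] := ltrP (- `|X|) Y.
  by apply: (not_bd _ _ _ bd1); apply: (ext_cert _ _ _ _ _ Sp hd).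
have [h2|h2] := ltrP (- `|- X|) (- Y).
  apply: (not_bd _ _ _ bd2); apply: (ext_cert _ _ _ _ _ Sp hd) => //.
  by rewrite normrN.
rewrite normrN in h2.
have Y0 : Y = 0 by have := normr_ge0 X; lra.
move: hXY; rewrite Y0 normr0; have := normr_ge0 X; lra.
Qed.

End G.

Section G2.
Variable R : realType.
Notation pt := (R * R)%type.

Lemma exists_max (P : pt -> bool) (s : seq pt) p : p \in s -> P p ->
  exists q, [/\ q \in s, P q & forall q', q' \in s -> P q' -> q'.2 <= q.2].
Proof.
elim: s p => // a s IH p; rewrite inE => /orP[/eqP ->|ps] Pp.
  case Ps: (has P s).
    have /hasP[p' p's Pp'] := Ps.
    have [q [qs Pq hq]] := IH _ p's Pp'.
    have [aq|aq] := leP a.2 q.2.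
      exists q; split; [by rewrite inE qs orbT|by []|].
      by move=> q'; rewrite inE => /orP[/eqP ->|/hq]//.
    exists a; split; [by rewrite inE eqxx|by []|].
    move=> q'; rewrite inE => /orP[/eqP -> //|/hq h /h]; lra.
  exists a; split; [by rewrite inE eqxx|by []|].
  move=> q'; rewrite inE => /orP[/eqP -> //|q's Pq'].
  by move/hasPn: Ps => /(_ _ q's); rewrite Pq'.
have [q [qs Pq hq]] := IH _ ps Pp.
case Pa: (P a).
  have [aq|aq] := leP a.2 q.2.
    exists q; split; [by rewrite inE qs orbT|by []|].
    by move=> q'; rewrite inE => /orP[/eqP ->|/hq]//.
  exists a; split; [by rewrite inE eqxx|by []|].
  move=> q'; rewrite inE => /orP[/eqP -> //|/hq h /h]; lra.
exists q; split; [by rewrite inE qs orbT|by []|].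
move=> q'; rewrite inE => /orP[/eqP ->|/hq//]; by rewrite Pa.
Qed.

Lemma exists_gap (s : seq pt) q (f : pt -> R) :
  (forall q', q' \in s -> q' != q -> 0 < f q') ->
  exists2 d, 0 < d & forall q', q' \in s -> q' != q -> d <= f q'.
Proof.
elim: s => [|a s IH] h; first by exists 1 => //.
have [d d0 hd] : exists2 d, 0 < d & forall q', q' \in s -> q' != q -> d <= f q'.
  by apply: IH => q' q's; apply: h; rewrite inE q's orbT.
have [aq|aq] := eqVneq a q.
  exists d => // q'; rewrite inE => /orP[/eqP -> |/hd //]; by rewrite aq eqxx.
have fa : 0 < f a by apply: h; rewrite ?inE ?eqxx.
exists (Num.min d (f a)); first by rewrite lt_min d0 fa.
move=> q'; rewrite inE => /orP[/eqP -> _|q's q'q]; first by rewrite ge_min lexx orbT.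
by rewrite ge_min hd.
Qed.

Lemma vertex_col (s : seq pt) p (eps : R) : p \in s ->
  (forall q, q \in s -> q.2 <= 1) -> 1 - eps <= p.2 ->
  exists v, vertex (CH (@Dxy' R) (point_set s)) v /\ `|v.1 - p.1| <= eps.
Proof.
move=> ps s1 pe.
pose P (q : pt) := `|q.1 - p.1| <= q.2 - p.2.
have Pp : P p by rewrite /P !subrr normr0.
have [q [qs Pq hq]] := exists_max P s p ps Pp.
have gap : forall q', q' \in s -> q' != q -> 0 < `|q'.1 - q.1| - (q'.2 - q.2).
  move=> q' q's q'q; rewrite subr_gt0 ltNge; apply/negP => h.
  have Pq' : P q'.
    rewrite /P; have := ler_normD (q'.1 - q.1) (q.1 - p.1).
    have -> : q'.1 - q.1 + (q.1 - p.1) = q'.1 - p.1 by ring.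
    move: Pq; rewrite /P; lra.
  have le := hq _ q's Pq'.
  have h1 : `|q'.1 - q.1| = 0 by have := normr_ge0 (q'.1 - q.1); lra.
  have e1 : q'.1 = q.1 by apply/eqP; rewrite -subr_eq0 -normr_eq0 h1.
  have e2 : q'.2 = q.2 by lra.
  move/eqP: q'q; apply; case: q' e1 e2 {q's Pq' le h1 h} => a b /= -> ->.
  by rewrite -surjective_pairing.
have [d d0 hd] := exists_gap _ _ _ gap.
exists q; split.
  apply: (vertex_max R (point_set s) q d) => //.
  move=> q' q's /eqP q'q; have := hd q' q's q'q; lra.
move: Pq; rewrite /P; have := s1 q qs; lra.
Qed.


Lemma count_le_cpx (A : set pt) (P : nat -> bool) (col : nat -> pt -> Prop)
  (l : seq nat) : uniq l ->
  (forall j, P j -> exists v, vertex A v /\ col j v) ->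
  (forall j k v, col j v -> col k v -> j = k) ->
  (((count P l)%:R)%:E <= complexity A)%E.
Proof.
move=> ul hP hcol; rewrite /complexity.
case: ifPn => [/asboolP fin|_]; last by rewrite leey.
rewrite lee_fin ler_nat.
pose V := vertex A.
pose g j := xget (0, 0) [set v | V v /\ col j v].
have gP j : P j -> V (g j) /\ col j (g j).
  by move=> Pj; exact: (@xgetPex _ (0, 0) [set v | V v /\ col j v] (hP j Pj)).
pose L := map g (seq.filter P l).
have uL : uniq L.
  rewrite map_inj_in_uniq ?filter_uniq // => j k; rewrite !mem_filter.
  move=> /andP[Pj _] /andP[Pk _] gjk.
  apply: (hcol j k (g j)); first exact: (gP j Pj).2.
  by rewrite gjk; exact: (gP k Pk).2.
have sub : {subset L <= fset_set V}.
  move=> v /mapP[j]; rewrite mem_filter => /andP[Pj _] ->.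
  by rewrite in_fset_set // mem_set //; exact: (gP j Pj).1.
have := uniq_leq_size uL sub.
by rewrite size_map size_filter.
Qed.


Definition wd (m : nat) : R := (m%:R)^-1.
Definition inB (m j : nat) (q : pt) : bool :=
  (j%:R * wd m + wd m / 4 <= q.1 <= j%:R * wd m + 3 * wd m / 4) &&
  (1 - wd m / 8 <= q.2 <= 1).

Lemma nat_lt1 (j k : nat) : j%:R < k%:R + 1 :> R -> (j <= k)%N.
Proof. by move=> h; rewrite -ltnS -(ltr_nat R) -natr1. Qed.

Lemma cpx_ge (m : nat) (s : seq pt) : (0 < m)%N ->
  (forall q, q \in s -> q.2 <= 1) ->
  (((count (fun j => has (inB m j) s) (iota 0 m))%:R)%:E <=
    complexity (CH (@Dxy' R) (point_set s)))%E.
Proof.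
move=> m0 s1.
have w0 : 0 < wd m by rewrite /wd invr_gt0 ltr0n.
apply: (count_le_cpx _ _ (fun j (v : pt) =>
   j%:R * wd m + wd m / 8 <= v.1 <= j%:R * wd m + 7 * wd m / 8)).
- exact: iota_uniq.
- move=> j /hasP[p ps /andP[/andP[a b] /andP[c d]]].
  have [v [hv hd]] := vertex_col s p (wd m / 8) ps s1 c.
  exists v; split => //.
  move: hd; rewrite ler_norml => /andP[h1 h2]; apply/andP; split; lra.
- move=> j k v /andP[a b] /andP[c d].
  have h1 : j%:R < k%:R + 1 :> R.
    have : (j%:R - k%:R - 1) * wd m < 0 :> R by lra.
    by rewrite pmulr_llt0 // => ?; lra.
  have h2 : k%:R < j%:R + 1 :> R.
    have : (k%:R - j%:R - 1) * wd m < 0 :> R by lra.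
    by rewrite pmulr_llt0 // => ?; lra.
  by apply/eqP; rewrite eqn_leq !nat_lt1.
Qed.

End G2.

Import HBNNSimple.
Section M.
Local Open Scope ereal_scope.
Context d (T : measurableType d) (R : realType).
Variable mu : {measure set T -> \bar R}.

Lemma le_int_nm (D : set T) (f g : T -> \bar R) :
  (forall x, D x -> 0 <= f x) -> (forall x, D x -> f x <= g x) ->
  \int[mu]_(x in D) f x <= \int[mu]_(x in D) g x.
Proof.
move=> f0 fg.
have g0 x : D x -> 0 <= g x by move=> Dx; exact: le_trans (f0 x Dx) (fg x Dx).
rewrite !ge0_integralE //; apply: ereal_sup_le => _ [h hf <-]; exists h => //= x.
apply: le_trans (hf x) _; rewrite /patch; case: ifP => // /set_mem Dx.
exact: fg.
Qed.

Lemma sup_add (A B C : set (\bar R)) a0 b0 : A a0 -> B b0 ->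
  (forall a, A a -> 0 <= a) -> (forall b, B b -> 0 <= b) ->
  (forall a b, A a -> B b -> a + b <= ereal_sup C) ->
  ereal_sup A + ereal_sup B <= ereal_sup C.
Proof.
move=> Aa0 Bb0 A0 B0 h.
have : (exists r : R, ereal_sup C = r%:E) \/ ereal_sup C = +oo \/ ereal_sup C = -oo.
  by case: (ereal_sup C) => [r| |]; [left; exists r|right; left|right; right].
case=> [[r Mr]|[My|MNy]].
- rewrite Mr.
  have afin a : A a -> a \is a fin_num.
    move=> Aa; rewrite fin_numE; apply/andP; split.
      by apply/negP => /eqP ay; have := A0 a Aa; rewrite ay.
    apply/negP => /eqP ay; have := h a b0 Aa Bb0; rewrite Mr ay.
    by rewrite addye ?leye_eq //; have := B0 b0 Bb0; case: (b0).
  have hB a : A a -> ereal_sup B <= r%:E - a.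
    move=> Aa; apply: ge_ereal_sup => b Bb; rewrite leeBrDl ?afin //.
    by rewrite -Mr; exact: h.
  have Bfin : ereal_sup B \is a fin_num.
    rewrite fin_numE; apply/andP; split.
      apply/negP => /eqP By; have := ereal_sup_ubound Bb0; rewrite By.
      by rewrite leeNy_eq => /eqP b0y; have := B0 b0 Bb0; rewrite b0y.
    apply/negP => /eqP By; have := hB a0 Aa0; rewrite By leye_eq.
    by have := afin a0 Aa0; case: (a0).
  rewrite -leeBrDr //; apply: ge_ereal_sup => a Aa.
  by rewrite leeBrDr // -leeBrDl ?afin //; exact: hB.
- by rewrite My leey.
- by have := h a0 b0 Aa0 Bb0; rewrite MNy leeNy_eq => /eqP/eqP;
    rewrite adde_eq_ninfty; have := A0 a0 Aa0; have := B0 b0 Bb0; case: a0 {Aa0 h}; case: b0 {Bb0}.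
Qed.

Lemma int_superadd (D : set T) (f g : T -> \bar R) :
  (forall x, D x -> 0 <= f x) -> (forall x, D x -> 0 <= g x) ->
  \int[mu]_(x in D) f x + \int[mu]_(x in D) g x <= \int[mu]_(x in D) (f x + g x).
Proof.
move=> f0 g0.
have fg0 x : D x -> 0 <= f x + g x by move=> Dx; rewrite adde_ge0 ?f0 ?g0.
rewrite !ge0_integralE //.
have z0 (k : T -> \bar R) : (forall x, D x -> 0 <= k x) ->
    forall x, ((nnsfun0 : {nnsfun T >-> R}) x)%:E <= (k \_ D) x.
  move=> k0 x; rewrite /patch; case: ifP => // /set_mem Dx; exact: k0.
apply: (@sup_add _ _ _ (sintegral mu (nnsfun0 : {nnsfun T >-> R})) (sintegral mu (nnsfun0 : {nnsfun T >-> R}))).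
- by exists nnsfun0 => //; exact: z0.
- by exists nnsfun0 => //; exact: z0.
- by move=> _ [h _ <-]; exact: sintegral_ge0.
- by move=> _ [h _ <-]; exact: sintegral_ge0.
move=> _ _ [h1 h1f <-] [h2 h2g <-].
rewrite -sintegralD; apply: ereal_sup_ubound; exists (add_nnsfun h1 h2) => //= x.
have := h1f x; have := h2g x; rewrite /patch; case: ifP => _; last first.
  by move=> a b; rewrite EFinD; apply: le_trans (leeD b a) _; rewrite adde0.
by move=> a b; rewrite EFinD; apply: leeD.
Qed.
End M.

Section M2.
Local Open Scope ereal_scope.
Variable R : realType.
Notation pt := (R * R)%type.
Notation lam := (@lebesgue_measure R).

Definition good (s : seq pt) := all (fun q : pt => (q.2 <= 1)%R) s.

Lemma unitI1 (y : R) : unitI y -> (y <= 1)%R.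
Proof. by rewrite /unitI /= in_itv /= => /andP[]. Qed.

Lemma good_cons x y s : unitI y -> good s -> good ((x, y) :: s).
Proof. by move=> /unitI1 y1 gs; rewrite /good /= y1. Qed.

Lemma ue_ge0 n (f : seq pt -> \bar R) : (forall s, good s -> 0 <= f s) ->
  0 <= unif_exp n f.
Proof.
elim: n f => [|n IH] f f0 /=; first exact: f0.
apply: integral_ge0 => x Ix; apply: integral_ge0 => y Iy.
by apply: IH => s gs; apply: f0; exact: good_cons.
Qed.

Lemma ue_le n (f g : seq pt -> \bar R) : (forall s, good s -> 0 <= f s) ->
  (forall s, good s -> f s <= g s) -> unif_exp n f <= unif_exp n g.
Proof.
elim: n f g => [|n IH] f g f0 fg /=; first by apply: fg.
apply: le_int_nm => x Ix.
  apply: integral_ge0 => y Iy; apply: ue_ge0 => s gs; apply: f0; exact: good_cons.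
apply: le_int_nm => y Iy.
  apply: ue_ge0 => s gs; apply: f0; exact: good_cons.
by apply: IH => s gs; [apply: f0|apply: fg]; exact: good_cons.
Qed.

Lemma ue_add n (f g : seq pt -> \bar R) : (forall s, good s -> 0 <= f s) ->
  (forall s, good s -> 0 <= g s) ->
  unif_exp n f + unif_exp n g <= unif_exp n (fun s => f s + g s).
Proof.
elim: n f g => [|n IH] f g f0 g0 /=; first by [].
have hf x y : unitI y -> 0 <= unif_exp n (fun s => f ((x, y) :: s)).
  by move=> Iy; apply: ue_ge0 => s gs; apply: f0; exact: good_cons.
have hg x y : unitI y -> 0 <= unif_exp n (fun s => g ((x, y) :: s)).
  by move=> Iy; apply: ue_ge0 => s gs; apply: g0; exact: good_cons.
apply: le_trans; first apply: int_superadd.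
- by move=> x Ix; apply: integral_ge0 => y Iy; exact: hf.
- by move=> x Ix; apply: integral_ge0 => y Iy; exact: hg.
apply: le_int_nm => x Ix.
  by apply: adde_ge0; apply: integral_ge0 => y Iy; [exact: hf|exact: hg].
apply: le_trans; first by apply: int_superadd => y Iy; [exact: hf|exact: hg].
apply: le_int_nm => y Iy; first by apply: adde_ge0; [exact: hf|exact: hg].
by apply: IH => s gs; [apply: f0|apply: g0]; exact: good_cons.
Qed.

Lemma ue_sum n (l : seq nat) (F : nat -> seq pt -> \bar R) :
  (forall j s, good s -> 0 <= F j s) ->
  \sum_(j <- l) unif_exp n (F j) <= unif_exp n (fun s => \sum_(j <- l) F j s).
Proof.
move=> F0; elim: l => [|a l IH].
  by rewrite big_nil; apply: ue_ge0 => s _; rewrite big_nil.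
rewrite big_cons; apply: le_trans; first exact: (leeD (lexx _) IH).
apply: le_trans; first apply: ue_add => s gs.
- exact: F0.
- by apply: sume_ge0 => j _; exact: F0.
by apply: ue_le => s gs; rewrite ?big_cons //; apply: adde_ge0; [exact: F0|apply: sume_ge0 => j _; exact: F0].
Qed.

Lemma lam_unitI : lam (@unitI R) = 1.
Proof. by rewrite /unitI lebesgue_measure_itv /= lte01 oppr0 adde0. Qed.

Lemma int_cst1 (c : R) : \int[lam]_(x in @unitI R) c%:E = c%:E.
Proof.
rewrite (_ : (fun _ => c%:E) = cst c%:E) // integral_cst //.
rewrite -[RHS]mule1; congr (_ * _); first exact: lam_unitI.
exact: measurable_itv.
Qed.

Lemma ue_cst n (c : R) : unif_exp n (fun _ => c%:E) = c%:E.
Proof. by elim: n => [|n IH] //=; rewrite IH !int_cst1. Qed.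
End M2.

Section M3.
Local Open Scope ereal_scope.
Variable R : realType.
Notation pt := (R * R)%type.
Notation lam := (@lebesgue_measure R).

Lemma lam_itv (a b : R) : (a <= b)%R -> lam `[a, b]%classic = (b - a)%:E.
Proof.
move=> ab; rewrite lebesgue_measure_itv /=.
rewrite lte_fin; case: ltP => h; first by rewrite EFinB.
have -> : b = a by lra.
by rewrite subrr.
Qed.

Lemma L_int (al be a b : R) : (0 <= al)%R -> (0 <= be)%R -> (0 <= a)%R -> (a <= b)%R -> (b <= 1)%R ->
  \int[lam]_(y in @unitI R) (al + be * \1_(`[a, b]%classic) y)%:E = (al + be * (b - a))%:E.
Proof.
move=> al0 be0 a0 ab b1.
have mI : measurable (@unitI R) by exact: measurable_itv.
under eq_integral do rewrite EFinD.
rewrite ge0_integralD //; last 2 first.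
- by move=> y _; rewrite lee_fin mulr_ge0.
- apply/measurable_realfun.measurable_EFinP; apply: measurable_realfun.measurable_funM; first exact: measurable_cst.
  exact: measurable_realfun.measurable_indic.
rewrite int_cst1.
have HZ := integralZl_indic (m := lam) mI (fun _ => `[a, b]%classic) be.
rewrite /= in HZ; rewrite HZ //; last by move=> ?; exfalso; lra.
rewrite integral_indic //.
rewrite setIidl; last first.
  by move=> y /=; rewrite /unitI /= !in_itv /= => /andP[h1 h2]; apply/andP; split; lra.
transitivity (al%:E + be%:E * (b - a)%:E).
  by congr (_ + _ * _); exact: lam_itv.
by rewrite -EFinM -EFinD.
Qed.

Lemma indic_itv (a b x : R) :
  \1_(`[a, b]%classic) x = (((a <= x <= b)%R : bool)%:R : R).
Proof.
rewrite indicE; congr (_%:R).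
rewrite /= set_itvE; congr nat_of_bool; apply/idP/idP => [/set_mem //|h]; exact: mem_set.
Qed.

Variables x1 x2 y1 y2 : R.
Hypothesis hx : ((0 <= x1) && (x1 <= x2) && (x2 <= 1))%R.
Hypothesis hy : ((0 <= y1) && (y1 <= y2) && (y2 <= 1))%R.
Definition inbox (q : pt) : bool := ((x1 <= q.1 <= x2) && (y1 <= q.2 <= y2))%R.
Definition area : R := ((x2 - x1) * (y2 - y1))%R.
Definition G (b : bool) (s : seq pt) : \bar R := (((b || has inbox s) : bool)%:R)%:E.
Definition cb (n : nat) (b : bool) : R := if b then 1%R else (1 - (1 - area) ^+ n)%R.

Lemma area01 : (0 <= area <= 1)%R.
Proof.
move: hx hy => /andP[/andP[? ?] ?] /andP[/andP[? ?] ?].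
rewrite /area; apply/andP; split; first by apply: mulr_ge0; lra.
have : ((x2 - x1) * (y2 - y1) <= 1 * 1)%R.
  by apply: ler_pM; lra.
lra.
Qed.

Lemma pow01 n : (0 <= (1 - area) ^+ n <= 1)%R.
Proof.
have := area01 => /andP[a0 a1].
apply/andP; split; first by apply: exprn_ge0; lra.
by apply: exprn_ile1; lra.
Qed.

Lemma ue_box n b : (cb n b)%:E <= unif_exp n (G b).
Proof.
elim: n b => [|n IH] b.
  by case: b; rewrite /cb /G /= ?expr0 ?subrr.
have G0 b' s : 0 <= G b' s by rewrite /G lee_fin.
rewrite /=.
have step x y : unif_exp n (fun s => G b ((x, y) :: s)) = unif_exp n (G (b || inbox (x, y))).
  by congr unif_exp; apply: funext => s; rewrite /G /= orbA.
apply: (@le_trans _ _ (\int[lam]_(x in @unitI R) \int[lam]_(y in @unitI R) (cb n (b || inbox (x, y)))%:E)); last first.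
  apply: le_int_nm => x Ix.
    apply: integral_ge0 => y Iy; rewrite lee_fin /cb; case: ifP => _ //.
    by have := pow01 n; lra.
  apply: le_int_nm => y Iy.
    by rewrite lee_fin /cb; case: ifP => _ //; have := pow01 n; lra.
  by rewrite step; exact: IH.
case: b {step}.
  by rewrite /cb /=; under eq_integral do rewrite int_cst1; rewrite int_cst1.
set C := (1 - (1 - area) ^+ n)%R.
have C01 : (0 <= C <= 1)%R by have := pow01 n; rewrite /C; lra.
move: hx hy => /andP[/andP[hx1 hx2] hx3] /andP[/andP[hy1 hy2] hy3].
rewrite (@eq_integral _ _ _ lam _ (fun x => (C + ((1 - C) * (y2 - y1)) * \1_(`[x1, x2]%classic) x)%:E)).
  rewrite L_int //; last 2 first.
  - lra.
  - by apply: mulr_ge0; lra.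
  rewrite /cb lee_fin /C exprSr /area le_eqVlt; apply/orP; left; apply/eqP; ring.
move=> x Ix.
rewrite (@eq_integral _ _ _ lam _ (fun y => (C + ((1 - C) * ((x1 <= x <= x2)%R : bool)%:R) * \1_(`[y1, y2]%classic) y)%:E)).
  rewrite L_int //; last 2 first.
  - lra.
  - by apply: mulr_ge0; [lra|case: (_ && _)].
  by rewrite indic_itv; congr EFin; ring.
move=> y Iy; rewrite indic_itv /cb /inbox /=.
by case: (x1 <= x <= x2)%R; case: (y1 <= y <= y2)%R; rewrite /= ?mulr1 ?mulr0 ?addr0 //; congr EFin; ring.
Qed.
End M3.

Section F.
Variable R : realType.
Notation pt := (R * R)%type.

Lemma bern (a : R) (k : nat) : 0 <= a <= 1 -> (1 - a) ^+ k * (1 + k%:R * a) <= 1.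
Proof.
move=> /andP[a0 a1]; elim: k => [|k IH]; first by rewrite expr0 mul0r addr0 mulr1.
have p0 : 0 <= (1 - a) ^+ k by apply: exprn_ge0; lra.
rewrite exprSr -mulrA.
have h : (1 - a) * (1 + k.+1%:R * a) <= 1 + k%:R * a.
  rewrite -natr1; have k0 : 0 <= k%:R :> R by [].
  nra.
apply: le_trans IH; exact: ler_wpM2l.
Qed.

Lemma nat_sqrt (n : nat) : exists m, (m * m <= n < m.+1 * m.+1)%N.
Proof.
elim: n => [|n [m hm]]; first by exists 0%N.
case: (ltnP n.+1 (m.+1 * m.+1)) => h.
  by exists m; lia.
by exists m.+1; lia.
Qed.

Lemma count_sumE (P : nat -> bool) (l : seq nat) :
  (((count P l)%:R)%:E = \sum_(j <- l) (((P j : bool)%:R)%:E : \bar R))%E.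
Proof.
elim: l => [|a l IH]; first by rewrite big_nil.
by rewrite big_cons /= natrD EFinD IH.
Qed.

Lemma sum_cstE (c : R) (l : seq nat) :
  (\sum_(j <- l) c%:E = ((size l)%:R * c)%:E)%E.
Proof.
elim: l => [|a l IH]; first by rewrite big_nil mul0r.
by rewrite big_cons IH /= -EFinD -natr1 mulrDl mul1r addrC.
Qed.
End F.

Theorem corollary3p14 (R : realType) :
  exists c : R, 0 < c /\ exists n0 : nat, forall n : nat, (n0 <= n)%N ->
    ((c * Num.sqrt n%:R)%:E <=
     unif_exp n (fun s => complexity (CH (@Dxy' R) (point_set s))))%E.
Proof.
exists (1 / 34); split; first by apply: divr_gt0; rewrite ?ltr0n.
exists 1%N => n n1.
have [m /andP[hm1 hm2]] := nat_sqrt n.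
have m0 : (0 < m)%N by case: m hm1 hm2 => //; lia.
set w := wd R m.
have mw : m%:R * w = 1 by rewrite /w /wd mulfV // pnatr_eq0 -lt0n.
have w0 : 0 < w by rewrite /w /wd invr_gt0 ltr0n.
have m1 : 1 <= m%:R :> R by rewrite ler1n.
have w1 : w <= 1 by nra.
pose X1 (j : nat) := j%:R * w + w / 4.
pose X2 (j : nat) := j%:R * w + 3 * w / 4.
pose Y1 := 1 - w / 8.
pose F (j : nat) := G R (X1 j) (X2 j) Y1 1 false.
pose a := (w / 2) * (w / 8).
have areaE j : area R (X1 j) (X2 j) Y1 1 = a.
  by rewrite /area /X1 /X2 /Y1 /a; field.
have hxj k : k \in iota 0 m ->
    (0 <= X1 k <= X2 k)%R && (X2 k <= 1)%R.
  rewrite mem_iota add0n => /andP[_ jm].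
  have : (k.+1)%:R <= m%:R :> R by rewrite ler_nat.
  rewrite -natr1 => jm'.
  have j0 : 0 <= k%:R :> R by [].
  rewrite /X1 /X2; apply/andP; split; first by apply/andP; split; nra.
  nra.
have hy : (0 <= Y1 <= 1)%R && (1 <= 1 :> R)%R by rewrite /Y1; apply/andP; split => //; apply/andP; split; lra.
have a01 : 0 <= a <= 1 by rewrite /a; apply/andP; split; nra.
have na : 1 / 16 <= n%:R * a.
  have : (m * m)%:R <= n%:R :> R by rewrite ler_nat.
  rewrite natrM /a => h.
  have : m%:R * m%:R * (w * w) = 1 by rewrite -mulrA (mulrCA _ w) mw mulr1 mw.
  nra.
have pn : (1 - a) ^+ n <= 16 / 17.
  have := bern R a n a01; have := exprn_ge0 n (_ : 0 <= 1 - a); nra.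
apply: (@le_trans _ _ (\sum_(j <- iota 0 m) ((1 - (1 - a) ^+ n)%:E))%E).
  rewrite sum_cstE size_iota lee_fin.
  have sq : Num.sqrt (n%:R : R) <= 2 * m%:R.
    have h : n%:R < (2 * m%:R) ^+ 2 :> R.
      have : (n < (2 * m) * (2 * m))%N by nia.
      by rewrite -(ltr_nat R) natrM natrM expr2.
    have h2 : Num.sqrt (n%:R : R) < Num.sqrt ((2 * m%:R) ^+ 2).
      by rewrite ltr_sqrt // exprn_gt0 // mulr_gt0 // ltr0n.
    have e : `|2 * m%:R| = 2 * m%:R :> R by rewrite ger0_norm //; nra.
    rewrite sqrtr_sqr e in h2; lra.
  have : m%:R * (1 / 17) <= m%:R * (1 - (1 - a) ^+ n) :> R.
    by apply: ler_wpM2l; lra.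
  lra.
apply: (@le_trans _ _ (\sum_(j <- iota 0 m) unif_exp n (F j))%E).
  rewrite !big_seq; apply: lee_sum => j hj.
  have := ue_box R _ _ _ _ (hxj j hj) hy n false.
  by rewrite /cb areaE.
apply: le_trans; first apply: ue_sum.
  by move=> j s _; rewrite /F /G lee_fin.
apply: ue_le.
  by move=> s _; apply: sume_ge0 => j _; rewrite /F /G lee_fin.
move=> s gs.
apply: le_trans (cpx_ge R m s m0 _); last by move=> q qs; move/allP: gs => /(_ q qs).
rewrite count_sumE; apply: lee_sum => j _; exact: lexx.
Qed.
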